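(* Let $\beta,p$ be positive integers with $\beta\ge p$. Then $C(1,\beta,p)=C_{WWL}(\beta,p)$.
   Context: Memory cells are binary; cell-state vectors of $n$ cells lie in $\{0,1\}^n$. A code on $n$ cells consists, for each write $i\ge1$, of a real $R_i\ge0$, an encoder $\mathcal{E}_i:\{1,\ldots,\lfloor2^{nR_i}\rfloor\}\times\{0,1\}^n\to\{0,1\}^n$ and decoder $\mathcal{D}_i$ with $\mathcal{D}_i(\mathcal{E}_i(m,\mathbf{u}))=m$ (both may depend on $i$; the decoder sees only the current state). Starting from $\mathbf{v}_0=\mathbf{0}$, messages produce states $\mathbf{v}_i=\mathcal{E}_i(m_i,\mathbf{v}_{i-1})$. The code is $(\alpha,\beta,p)$-constrained if for every message sequence, every $i\ge0$ and every $1\le j\le n-\beta+1$, $|\{(k,\ell): v_{i+k,j+\ell}\ne v_{i+k+1,j+\ell}, 0\le k<\alpha, 0\le\ell<\beta\}|\le p$. Rate: $\lim_{m\to\infty}\frac1m\sum_{i=1}^mR_i$. $C_n(\alpha,\beta,p)$ is the supremum of rates of $(\alpha,\beta,p)$-constrained codes on $n$ cells and $C(\alpha,\beta,p)=\lim_{n\to\infty}C_n(\alpha,\beta,p)$. A binary vector is $(\beta,p)$-window-weight-limited (WWL) if every $\beta$ consecutive entries contain at most $p$ ones; with $\mathcal{S}_n(\beta,p)$ the set of such vectors of length $n$, $C_{WWL}(\beta,p)=\lim_{n\to\infty}\frac1n\log_2|\mathcal{S}_n(\beta,p)|$. *)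

(* Defs.v *)
From HB Require Import structures.
From mathcomp Require Import all_boot all_order all_algebra.
From mathcomp Require Import all_classical all_reals all_analysis.
Set Implicit Arguments. Unset Strict Implicit. Unset Printing Implicit Defensive.
Import Order.TTheory GRing.Theory Num.Theory.
Import numFieldNormedType.Exports.
Local Open Scope classical_set_scope.
Local Open Scope ring_scope.

Definition cell (n : nat) (v : n.-tuple bool) (t : nat) : bool := nth false v t.

(* A (candidate) code on n cells.  Writes are indexed by i >= 1 (the data at
   index 0 is irrelevant).  Messages of write i are the naturals
   1 <= m <= floor(2^(n R_i)). *)
Record code (R : realType) (n : nat) := Code {
  wrate : nat -> R;
  enc   : nat -> nat -> n.-tuple bool -> n.-tuple bool;
  dec   : nat -> n.-tuple bool -> nat
}.

Definition nmsg (R : realType) (n : nat) (r : R) : nat :=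
  Num.truncn (2 `^ (n%:R * r)).

Definition is_msg (R : realType) n (c : code R n) (i m : nat) : bool :=
  (1 <= m <= nmsg n (wrate c i))%N.

Definition valid_code (R : realType) n (c : code R n) : Prop :=
  forall i : nat, (1 <= i)%N ->
    0 <= wrate c i /\
    forall (m : nat) (u : n.-tuple bool), is_msg c i m -> dec c i (enc c i m u) = m.

Fixpoint state (R : realType) n (c : code R n) (ms : nat -> nat) (i : nat)
  : n.-tuple bool :=
  match i with
  | 0 => [tuple of nseq n false]
  | i'.+1 => enc c i'.+1 (ms i'.+1) (state c ms i')
  end.

(* number of cell changes within writes i..i+alpha and cells j..j+beta-1 (0-indexed j) *)
Definition nchanges (R : realType) n (c : code R n) (ms : nat -> nat)
  (alpha beta i j : nat) : nat :=
  (\sum_(k < alpha) \sum_(l < beta)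
     (cell (state c ms (i + k)) (j + l) != cell (state c ms (i + k).+1) (j + l)))%N.

Definition constrained (R : realType) n (c : code R n) (alpha beta p : nat) : Prop :=
  forall ms : nat -> nat, (forall i, (1 <= i)%N -> is_msg c i (ms i)) ->
    forall i j : nat, (j + beta <= n)%N -> (nchanges c ms alpha beta i j <= p)%N.

Definition has_rate (R : realType) n (c : code R n) (r : R) : Prop :=
  (fun m : nat => (m%:R)^-1 * \sum_(1 <= i < m.+1) wrate c i) @ \oo --> r.

Definition Cn (R : realType) (n alpha beta p : nat) : R :=
  sup [set r : R | exists c : code R n,
         valid_code c /\ constrained c alpha beta p /\ has_rate c r].

Definition wwl (n beta p : nat) (v : n.-tuple bool) : bool :=
  [forall j : 'I_n.+1, (j + beta <= n)%N ==>
     (\sum_(l < beta) cell v (j + l) <= p)%N].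

Definition S_card (n beta p : nat) : nat := #|[set v : n.-tuple bool | wwl beta p v]|.

Definition log2 (R : realType) (x : R) : R := ln x / ln 2.

Definition wwl_rate (R : realType) (beta p n : nat) : R :=
  (n%:R)^-1 * log2 ((S_card n beta p)%:R : R).

(* Main.v *)
Require Import Defs.
From HB Require Import structures.
From mathcomp Require Import all_boot all_order all_algebra.
From mathcomp Require Import all_classical all_reals all_analysis.
From mathcomp Require Import zify ring lra.
Require Import Defs.
Import Order.TTheory GRing.Theory Num.Theory.
Import numFieldNormedType.Exports.
Local Open Scope ring_scope.
Set Implicit Arguments. Unset Strict Implicit. Unset Printing Implicit Defensive.

Definition xt n (u v : n.-tuple bool) : n.-tuple bool :=
  [tuple of map (fun ab : bool * bool => ab.1 (+) ab.2) (zip u v)].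
Definition zt n : n.-tuple bool := [tuple of nseq n false].

Lemma cell_xt n (u v : n.-tuple bool) t : cell (xt u v) t = cell u t (+) cell v t.
Proof.
rewrite /cell /xt /=.
case: (ltnP t n) => ht.
  rewrite (nth_map (false, false)); last by rewrite size_zip !size_tuple minnn.
  by rewrite nth_zip ?size_tuple.
rewrite !nth_default // ?size_map ?size_zip ?size_tuple ?minnn //.
Qed.

Lemma cell_zt n t : cell (zt n) t = false.
Proof. by rewrite /cell /= nth_nseq if_same. Qed.

Lemma tuple_ext n (u v : n.-tuple bool) : (forall t, cell u t = cell v t) -> u = v.
Proof.
move=> h; apply: val_inj; apply: (@eq_from_nth _ false); first by rewrite !size_tuple.
by move=> i _; exact: h.
Qed.

Lemma xtA n (u v w : n.-tuple bool) : xt u (xt v w) = xt (xt u v) w.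
Proof. by apply: tuple_ext => t; rewrite !cell_xt addbA. Qed.
Lemma xtC n (u v : n.-tuple bool) : xt u v = xt v u.
Proof. by apply: tuple_ext => t; rewrite !cell_xt addbC. Qed.
Lemma xtK n (u v : n.-tuple bool) : xt u (xt u v) = v.
Proof. by apply: tuple_ext => t; rewrite !cell_xt addKb. Qed.
Lemma xtKr n (u v : n.-tuple bool) : xt (xt v u) u = v.
Proof. by apply: tuple_ext => t; rewrite !cell_xt addbK. Qed.
Lemma xt0 n (u : n.-tuple bool) : xt u (zt n) = u.
Proof. by apply: tuple_ext => t; rewrite !cell_xt cell_zt addbF. Qed.
Lemma xtvv n (u : n.-tuple bool) : xt u u = zt n.
Proof. by apply: tuple_ext => t; rewrite !cell_xt cell_zt addbb. Qed.
Lemma xt_inj n (u : n.-tuple bool) : injective (xt u).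
Proof. by move=> a b h; rewrite -(xtK u a) h xtK. Qed.

Definition grpC n (C : {set n.-tuple bool}) :=
  zt n \in C /\ forall c c', c \in C -> c' \in C -> xt c c' \in C.
Definition Unc n (S C : {set n.-tuple bool}) :=
  [set v | [forall c in C, xt v c \notin S]].

Lemma avgU n (U : {set n.-tuple bool}) :
  (\sum_x #|U :&: [set v | xt v x \in U]| = #|U| * #|U|)%N.
Proof.
transitivity (\sum_(x : n.-tuple bool) \sum_(v : n.-tuple bool)
   ((v \in U) && (xt v x \in U) : nat))%N.
  apply: eq_bigr; move=> x _; rewrite -sum1_card big_mkcond /=.
  apply: congr_big => // v _. rewrite !inE; by case: (_ && _).
rewrite exchange_big /=.
transitivity (\sum_(v : n.-tuple bool) ((v \in U) * #|U|))%N.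
  apply: eq_bigr; move=> v _; case: (boolP (v \in U)) => hv /=; last by rewrite big1.
  rewrite mul1n -(card_preimset U (@xt_inj n v)) -sum1_card [in RHS]big_mkcond /=.
  by apply: eq_bigr; move=> x _; rewrite !inE xtC; case: (_ \in U).
rewrite -sum_nat_const [in RHS]big_mkcond /=; apply: eq_bigr; move=> v _.
by case: (v \in U); rewrite ?mul1n ?mul0n.
Qed.

Lemma exists_small (T : finType) (x0 : T) (F : T -> nat) K :
  (\sum_x F x = K)%N -> exists x, (F x * #|T| <= K)%N.
Proof.
move=> hs; case: (boolP [exists x, F x * #|T| <= K]%N) => [/existsP//|/existsPn h].
have : (\sum_(x : T) K.+1 <= \sum_(x : T) F x * #|T|)%N.
  by apply: leq_sum => x _; rewrite ltnNge h.
rewrite -big_distrl /= hs sum_nat_const cardT -cardT.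
have hT : (0 < #|T|)%N by apply/card_gt0P; exists x0.
by rewrite [X in (_ <= X)%N]mulnC leq_pmul2l // ltnn.
Qed.

Lemma stepC n (S C : {set n.-tuple bool}) : grpC C ->
  exists C', grpC C' /\ (#|C'| <= 2 * #|C|)%N /\
    (#|Unc S C'| * 2 ^ n <= #|Unc S C| * #|Unc S C|)%N.
Proof.
move=> [C0 CC].
have [x hx] := exists_small (zt n) (avgU (Unc S C)).
exists (C :|: [set xt c x | c in C]); split; [split|split].
- by rewrite inE C0.
- move=> a b; rewrite !inE => /orP[ha|/imsetP[a' ha' ->]] /orP[hb|/imsetP[b' hb' ->]].
  + by rewrite CC.
  + apply/orP; right; apply/imsetP; exists (xt a b'); first exact: CC.
    by rewrite xtA.
  + apply/orP; right; apply/imsetP; exists (xt a' b); first exact: CC.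
    by rewrite -!xtA (xtC x b).
  + apply/orP; left; rewrite -xtA (xtC x) -xtA xtvv xt0. exact: CC.
- apply: (leq_trans (leq_card_setU _ _)).
  by rewrite mul2n -addnn leq_add2l leq_imset_card.
- move: hx; rewrite card_tuple card_bool; apply: leq_trans.
  rewrite leq_mul2r; apply/orP; right.
  apply: subset_leq_card; apply/fintype.subsetP => v; rewrite !inE => /forall_inP h.
  apply/andP; split; apply/forall_inP => c hc.
  + by apply: h; rewrite inE hc.
  + rewrite -xtA; apply: h; rewrite inE; apply/orP; right.
    by apply/imsetP; exists c => //; rewrite xtC.
Qed.

Lemma iterC (R : realType) n (S : {set n.-tuple bool}) (t : nat) :
  (#|S| <= 2 ^ n)%N ->
  exists C, grpC C /\ (#|C| <= 2 ^ t)%N /\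
    (#|Unc S C|%:R : R) <= (2 ^ n)%:R * (1 - #|S|%:R / (2 ^ n)%:R) ^+ (2 ^ t).
Proof.
move=> hS.
have N0 : (0 : R) < (2 ^ n)%:R by rewrite ltr0n expn_gt0.
have x0ge : (0 : R) <= 1 - #|S|%:R / (2 ^ n)%:R.
  by rewrite subr_ge0 ler_pdivrMr // mul1r ler_nat.
elim: t => [|t [C [hC [hc hu]]]].
  exists [set zt n]; split; [split|split].
  - by rewrite inE.
  - by move=> c c'; rewrite !inE => /eqP -> /eqP ->; rewrite xtvv.
  - by rewrite cards1.
  - have -> : Unc S [set zt n] = ~: S.
      by apply/setP => v; rewrite !inE; apply/forall_inP/idP =>
        [h|h c]; [move: (h (zt n)); rewrite inE eqxx xt0; apply | rewrite inE => /eqP ->; rewrite xt0].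
    rewrite cardsCs finset.setCK card_tuple card_bool expr1 natrB // mulrBr mulr1.
    by rewrite mulrCA divff ?mulr1 // gt_eqF.
have [C' [hC' [hc' hu']]] := stepC S hC.
exists C'; split; [done|split].
  by rewrite expnS (leq_trans hc') // leq_mul2l hc orbT.
set x := (1 - _) in x0ge hu *.
have hu2 : (#|Unc S C'|%:R : R) * (2 ^ n)%:R <= #|Unc S C|%:R * #|Unc S C|%:R.
  by rewrite -!natrM ler_nat.
rewrite -(ler_pM2r N0); apply: (le_trans hu2).
rewrite expnSr exprM expr2.
have h0 : (0 : R) <= #|Unc S C|%:R by [].
apply: le_trans (ler_pM h0 h0 hu hu) _.
by rewrite le_eqVlt; apply/orP; left; apply/eqP; ring.
Qed.

Lemma uncov_zero (R : realType) n (S : {set n.-tuple bool}) (t : nat) C :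
  (0 < #|S|)%N -> (#|S| <= 2 ^ n)%N ->
  (n.+1 * 2 ^ n <= #|S| * 2 ^ t)%N ->
  (#|Unc S C|%:R : R) <= (2 ^ n)%:R * (1 - #|S|%:R / (2 ^ n)%:R) ^+ (2 ^ t) ->
  #|Unc S C| = 0%N.
Proof.
move=> s0 hS ht hu.
set N : R := (2 ^ n)%:R in hu.
set s : R := #|S|%:R in hu.
set k := (2 ^ t)%N in ht hu.
have N0 : 0 < N by rewrite ltr0n expn_gt0.
have x0ge : (0 : R) <= 1 - s / N by rewrite subr_ge0 ler_pdivrMr // mul1r ler_nat.
have e1 : 1 - s / N <= expR (- (s / N)) by have := expR_ge1Dx (- (s / N)).
have e2 : (1 - s / N) ^+ k <= expR (- (s / N)) ^+ k.
  by apply: lerXn2r => //; rewrite nnegrE // ltW // expR_gt0.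
rewrite -expRM_natl in e2.
have hks : (n.+1%:R : R) <= k%:R * (s / N).
  rewrite mulrA ler_pdivlMr // /s /N -!natrM ler_nat mulnC.
  by rewrite mulnC (mulnC k).
have e3 : expR (k%:R * - (s / N)) <= expR (- (n.+1%:R)) :> R.
  by rewrite ler_expR mulrN lerN2.
have e4 : (2 : R) ^+ n.+1 <= expR (n.+1%:R).
  rewrite -[X in expR X]mulr1 expRM_natl; apply: lerXn2r => //.
  - by rewrite nnegrE.
  - by rewrite nnegrE ltW // expR_gt0.
  - by have := expR_ge1Dx (1 : R); rewrite (_ : 1 + 1 = 2 :> R) //.
have hN : N = 2 ^+ n by rewrite /N natrX.
have e5 : N * expR (- (n.+1%:R)) <= 1 / 2.
  rewrite expRN hN -/(_ / _) ler_pdivrMr ?expR_gt0 //.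
  move: e4; rewrite exprS; lra.
have hfin : (#|Unc S C|%:R : R) <= 1 / 2.
  apply: (le_trans hu); apply: le_trans e5.
  by rewrite ler_pM2l //; apply: (le_trans e2).
move: hfin; case: #|Unc S C| => // m h; exfalso.
have : (1 : R) <= m.+1%:R by rewrite ler1n.
lra.
Qed.

Lemma coverC (R : realType) n (S : {set n.-tuple bool}) :
  (0 < #|S|)%N -> (#|S| <= 2 ^ n)%N ->
  exists C, grpC C /\ (forall v, exists2 c, c \in C & xt v c \in S) /\
    (#|C| * #|S| <= 2 * n.+1 * 2 ^ n)%N.
Proof.
move=> s0 hS.
have ex : exists t, (n.+1 * 2 ^ n <= #|S| * 2 ^ t)%N.
  exists (n.+1 * 2 ^ n)%N; rewrite (leq_trans (ltnW (ltn_expl _ (ltnSn 1)))) //.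
  by rewrite leq_pmull.
case: (ex_minnP ex) => t ht tmin.
have hb : (#|S| * 2 ^ t <= 2 * n.+1 * 2 ^ n)%N.
  move: ht tmin; case: t => [|t'] ht tmin.
    by rewrite expn0 muln1 (leq_trans hS) // leq_pmull.
  have : ~~ (n.+1 * 2 ^ n <= #|S| * 2 ^ t')%N.
    by apply/negP => /tmin; rewrite ltnn.
  rewrite -ltnNge expnS => h.
  by rewrite mulnCA -mulnA leq_mul2l /= ltnW.
have [C [hC [hc hu]]] := iterC R t hS.
have u0 := uncov_zero s0 hS ht hu.
exists C; split; [done|split].
  move=> v; move/eqP: u0; rewrite cards_eq0 => /eqP /setP /(_ v).
  rewrite !inE => /negbT; rewrite negb_forall_in => /existsP [c /andP [hcC]].
  by rewrite negbK => hv; exists c.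
by apply: leq_trans hb; rewrite mulnC leq_mul2l hc orbT.
Qed.

Lemma S_cardE n beta p : S_card n beta p = #|[set v : n.-tuple bool | wwl beta p v]|.
Proof.
rewrite /S_card; apply: eq_card => v; rewrite inE.
apply/idP/idP; rewrite in_setE //.
Qed.

Lemma wwl_zt n beta p : wwl beta p (zt n).
Proof.
apply/forallP => j; apply/implyP => _.
by rewrite big1 // => l _; rewrite cell_zt.
Qed.

Lemma nchanges1 (R : realType) n (c : code R n) ms beta i j :
  nchanges c ms 1 beta i j =
  (\sum_(l < beta) cell (xt (state c ms i) (state c ms i.+1)) (j + l))%N.
Proof.
rewrite /nchanges big_ord1 addn0; apply: eq_bigr => l _.
by rewrite cell_xt negb_eqb.
Qed.

Lemma wwl_window n beta p (w : n.-tuple bool) j :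
  wwl beta p w -> (j + beta <= n)%N -> (\sum_(l < beta) cell w (j + l) <= p)%N.
Proof.
move=> /forallP h hj.
have hjn : (j < n.+1)%N by rewrite ltnS (leq_trans (leq_addr _ _) hj).
by move: (h (Ordinal hjn)) => /implyP /(_ hj).
Qed.

Lemma window_wwl (R : realType) n (c : code R n) ms beta p i :
  (forall j, (j + beta <= n)%N -> (nchanges c ms 1 beta i j <= p)%N) ->
  wwl beta p (xt (state c ms i) (state c ms i.+1)).
Proof.
move=> h; apply/forallP => j; apply/implyP => hj.
by rewrite -nchanges1; apply: h.
Qed.

Lemma nmsg_log2 (R : realType) n M : (0 < n)%N -> (0 < M)%N ->
  nmsg n (log2 (M%:R : R) / n%:R) = M.
Proof.
move=> n0 M0; rewrite /nmsg mulrCA divff ?pnatr_eq0 -?lt0n // mulr1.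
rewrite /powR pnatr_eq0 /= /log2 mulrAC -mulrA divff; last first.
  by rewrite gt_eqF // ln_gt0 // ltr1n.
by rewrite mulr1 lnK ?natrK // posrE ltr0n.
Qed.

Lemma rate_cst (R : realType) n (c : code R n) r :
  (forall i, wrate c i = r) -> has_rate c r.
Proof.
move=> h; rewrite /has_rate -cvg_shiftS /=.
have -> : (fun m : nat => (m.+1%:R)^-1 * \sum_(1 <= i < m.+2) wrate c i) = (fun=> r).
  apply: funext => m; under eq_bigr do rewrite h.
  rewrite sumr_const_nat subn1 /= -[r *+ _]mulr_natl mulKf //.
exact: cvg_cst.
Qed.

Lemma lower_code (R : realType) n beta p : (0 < n)%N ->
  exists M, (0 < M)%N /\ (S_card n beta p <= 2 * n.+1 * M)%N /\
   exists c : code R n, valid_code c /\ constrained c 1 beta p /\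
     has_rate c (log2 (M%:R : R) / n%:R).
Proof.
move=> n0.
set S := [set v : n.-tuple bool | wwl beta p v].
have zS : zt n \in S by rewrite inE wwl_zt.
have s0 : (0 < #|S|)%N by apply/card_gt0P; exists (zt n).
have sN : (#|S| <= 2 ^ n)%N.
  by rewrite (leq_trans (max_card _)) // card_tuple card_bool.
have [C [[C0 CC] [cov hC]]] := coverC R s0 sN.
pose cos (v : n.-tuple bool) := [set xt c v | c in C].
have cosE c y : c \in C -> cos (xt c y) = cos y.
  move=> hc; apply/setP => x; apply/imsetP/imsetP => [[c' hc' ->]|[c' hc' ->]].
    by exists (xt c' c); [exact: CC | rewrite xtA].
  by exists (xt c' c); [exact: CC | rewrite -xtA xtK].
have vin v : v \in cos v by apply/imsetP; exists (zt n); rewrite // xtC xt0.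
pose Q := [set cos v | v : n.-tuple bool].
pose M := #|Q|.
have hM : (2 ^ n <= M * #|C|)%N.
  pose rep (D : {set n.-tuple bool}) := odflt (zt n) [pick x in D].
  have sub : [set: n.-tuple bool] \subset
      [set xt pr.2 (rep pr.1) | pr in finset.setX Q C].
    apply/fintype.subsetP => v _.
    have : rep (cos v) \in cos v.
      rewrite /rep; case: pickP => [x hx //|/(_ v)]; by rewrite vin.
    move=> /imsetP [c0 hc0 hr]; apply/imsetP; exists (cos v, c0).
      by rewrite inE /= hc0 andbT; apply/imsetP; exists v.
    by rewrite /= hr xtK.
  have := subset_leq_card sub; rewrite cardsT card_tuple card_bool => h.
  by rewrite (leq_trans h) // (leq_trans (leq_imset_card _ _)) // cardsX.
have M0 : (0 < M)%N.
  by move: hM; case: (M) => //; rewrite mul0n leqNgt expn_gt0.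
exists M; split; first done; split.
  rewrite S_cardE -/S.
  have h2 : (#|S| * 2 ^ n <= 2 * n.+1 * M * 2 ^ n)%N.
    have := leq_mul (leqnn M) hC; have := leq_mul (leqnn #|S|) hM.
    move: (#|S|) (#|C|) (M) (2 ^ n)%N => a b c d; nia.
  by rewrite leq_pmul2r ?expn_gt0 in h2.
pose encf (m : nat) (u : n.-tuple bool) :=
  if [pick w in S | cos (xt u w) == nth finset.set0 (enum Q) m.-1] is Some w
  then xt u w else u.
pose decf (v : n.-tuple bool) := (index (cos v) (enum Q)).+1.
have encS m u : exists2 w, w \in S & encf m u = xt u w.
  rewrite /encf; case: pickP => [w /andP [hw _]|_]; first by exists w.
  by exists (zt n); rewrite ?xt0.
have decenc m u : (1 <= m <= M)%N -> decf (encf m u) = m.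
  move=> /andP [m1 mM].
  have mQ : (m.-1 < size (enum Q))%N by rewrite -cardE; case: (m) m1 mM.
  have DQ := mem_nth finset.set0 mQ; rewrite mem_enum in DQ.
  move: DQ => /imsetP [y _ hy].
  have [c hc hcS] := cov (xt u y).
  set w := xt (xt u y) c in hcS.
  have hw : cos (xt u w) = nth finset.set0 (enum Q) m.-1.
    by rewrite /w -!xtA xtK xtC cosE // hy.
  rewrite /encf; case: pickP => [w' /andP [_ /eqP hw']|/(_ w)]; last first.
    by rewrite hcS hw eqxx.
  rewrite /decf hw' index_uniq ?enum_uniq //; by case: (m) m1.
exists (Code (fun=> log2 (M%:R : R) / n%:R) (fun=> encf) (fun=> decf)).
split; [|split].
- move=> i _; split.
    rewrite /log2 divr_ge0 // divr_ge0 // ln_ge0 // ?ler1n // ler1n //.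
  move=> m u; rewrite /is_msg /= nmsg_log2 //; exact: decenc.
- move=> ms hms i j hj; rewrite nchanges1 /=.
  have [w hw ->] := encS (ms i.+1) (state (Code (fun=> log2 (M%:R : R) / n%:R)
     (fun=> encf) (fun=> decf)) ms i).
  rewrite xtK; apply: wwl_window hj; by rewrite inE in hw.
- exact: rate_cst.
Qed.

Lemma state_eq (R : realType) n (c : code R n) ms ms' t :
  (forall k, (k <= t)%N -> ms k = ms' k) -> state c ms t = state c ms' t.
Proof.
elim: t => [//|t IH] h /=.
by rewrite h // IH // => k hk; apply: h; rewrite (leq_trans hk).
Qed.

Lemma nmsg_ge1 (R : realType) n (r : R) : 0 <= r -> (1 <= nmsg n r)%N.
Proof.
move=> r0; rewrite /nmsg truncn_ge_nat ?powR_ge0 // /powR /=.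
rewrite (_ : (2 : R) == 0 = false); last by rewrite pnatr_eq0.
rewrite -[X in X <= _]expR0 ler_expR; apply: mulr_ge0; [exact: mulr_ge0 | apply: ln_ge0; lra].
Qed.

Lemma nmsg_le (R : realType) n beta p (c : code R n) i :
  valid_code c -> constrained c 1 beta p -> (1 <= i)%N ->
  (nmsg n (wrate c i) <= S_card n beta p)%N.
Proof.
move=> hv hc i1.
have ms0v : forall k, (1 <= k)%N -> is_msg c k 1.
  move=> k k1; rewrite /is_msg /= nmsg_ge1 //; by case: (hv k k1).
set u := state c (fun=> 1%N) i.-1.
set N := nmsg n (wrate c i).
have [r0 hdec] := hv i i1.
pose g (k : 'I_N) := xt u (enc c i k.+1 u).
have ginj : injective g.
  move=> k k' /xt_inj h; apply: val_inj => /=.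
  have mk : forall k0 : 'I_N, is_msg c i k0.+1 by move=> k0; rewrite /is_msg -/N ltn_ord.
  have e1 := hdec _ u (mk k); have e2 := hdec _ u (mk k').
  by rewrite h e2 in e1; case: e1.
rewrite S_cardE -(card_ord N) -(card_imset _ ginj).
apply: subset_leq_card; apply/fintype.subsetP => v /imsetP [k _ ->].
rewrite inE.
pose ms' := fun t => if t == i then k.+1 else 1%N.
have hms' : forall t, (1 <= t)%N -> is_msg c t (ms' t).
  move=> t t1; rewrite /ms'; case: eqP => [->|_]; last exact: ms0v.
  by rewrite /is_msg -/N ltn_ord.
have hw := window_wwl (hc ms' hms' i.-1).
rewrite /= (prednK i1) {2}/ms' eqxx in hw.
rewrite (@state_eq _ _ c ms' (fun=> 1%N)) in hw; first exact: hw.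
move=> t ht; rewrite /ms'; case: eqP => // ti; move: ht; rewrite ti -ltnS prednK // ltnn. by [].
Qed.

Lemma S_card_ge1 n beta p : (1 <= S_card n beta p)%N.
Proof. by rewrite S_cardE; apply/card_gt0P; exists (zt n); rewrite inE wwl_zt. Qed.

Lemma S_card_le n beta p : (S_card n beta p <= 2 ^ n)%N.
Proof. by rewrite S_cardE (leq_trans (max_card _)) // card_tuple card_bool. Qed.

Lemma wrate_le (R : realType) n beta p (c : code R n) i :
  (0 < n)%N -> valid_code c -> constrained c 1 beta p -> (1 <= i)%N ->
  wrate c i <= (log2 ((S_card n beta p)%:R : R) + 1) / n%:R.
Proof.
move=> n0 hv hc i1.
have hN := nmsg_le hv hc i1.
set s := S_card n beta p in hN.
have s1 : (1 <= s)%N by apply: S_card_ge1.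
set r := wrate c i.
have h1 : 2 `^ (n%:R * r) < (2 * s)%:R :> R.
  apply: lt_le_trans (truncnS_gt _) _; rewrite ler_nat.
  have : ((nmsg n r).+1 <= 2 * s)%N by rewrite mul2n -addnn -addn1 leq_add.
  by [].
have l2 : (0 : R) < ln 2 by rewrite ln_gt0 // ltr1n.
have h2 : n%:R * r * ln 2 < ln 2 + ln (s%:R).
  rewrite -ln_powR -lnM ?posrE ?ltr0n // -natrM ltr_ln ?posrE ?powR_gt0 ?ltr0n //.
  by rewrite muln_gt0.
have n0' : (0 : R) < n%:R by rewrite ltr0n.
rewrite ler_pdivlMr // /log2.
rewrite -(ler_pM2r l2) -/s mulrDl mul1r divfK ?gt_eqF //.
rewrite (mulrC r); lra.
Qed.

Lemma rate_le (R : realType) n beta p (c : code R n) r :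
  (0 < n)%N -> valid_code c -> constrained c 1 beta p -> has_rate c r ->
  r <= (log2 ((S_card n beta p)%:R : R) + 1) / n%:R.
Proof.
move=> n0 hv hc hr.
set B := (_ / _).
have B0 : 0 <= B.
  have l2 : (0 : R) < ln 2 by rewrite ln_gt0 // ltr1n.
  rewrite /B divr_ge0 // addr_ge0 // /log2 divr_ge0 ?(ltW l2) // ln_ge0 //.
  by rewrite ler1n S_card_ge1.
apply: (ler_cvg_to hr (cvg_cst B)); apply: nearW => m.
case: m => [|m]; first by rewrite invr0 mul0r.
rewrite ler_pdivrMl ?ltr0n //.
apply: le_trans (_ : _ <= \sum_(1 <= i < m.+2) B) _.
  by apply: ler_sum_nat => i /andP [i1 _]; apply: wrate_le.
by rewrite sumr_const_nat subn1 /= mulr_natl.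
Qed.

Lemma Cn_bounds (R : realType) n beta p : (0 < n)%N ->
  exists M, (0 < M)%N /\ (S_card n beta p <= 2 * n.+1 * M)%N /\
    log2 (M%:R : R) / n%:R <= Cn R n 1 beta p /\
    Cn R n 1 beta p <= (log2 ((S_card n beta p)%:R : R) + 1) / n%:R.
Proof.
move=> n0; have [M [M0 [hS [c [hv [hc hr]]]]]] := lower_code R beta p n0.
exists M; split; first done; split; first done.
set B := ((log2 ((S_card n beta p)%:R : R) + 1) / n%:R).
have ub : ubound [set r : R | exists c : code R n,
         valid_code c /\ constrained c 1 beta p /\ has_rate c r]%classic B.
  by move=> r [c' [hv' [hc' hr']]]; apply: rate_le hr'.
have inE0 : [set r : R | exists c : code R n,
         valid_code c /\ constrained c 1 beta p /\ has_rate c r]%classic (log2 (M%:R : R) / n%:R).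
  by exists c.
split.
  by apply: ub_le_sup; [exists B | ].
by apply: ge_sup; [exists (log2 (M%:R : R) / n%:R) |].
Qed.

Lemma cell_mk n (f : nat -> bool) t :
  cell [tuple f (val i) | i < n] t = if (t < n)%N then f t else false.
Proof.
case: ifP => ht.
  by have := nth_mktuple (fun i : 'I_n => f (val i)) false (Ordinal ht).
by rewrite /cell nth_default // size_tuple leqNgt ht.
Qed.

Lemma cell_out n (v : n.-tuple bool) t : (n <= t)%N -> cell v t = false.
Proof. by move=> h; rewrite /cell nth_default // size_tuple. Qed.

Lemma wwl_of n beta p (w : n.-tuple bool) :
  (forall j, (j + beta <= n)%N -> (\sum_(l < beta) cell w (j + l) <= p)%N) ->
  wwl beta p w.
Proof. by move=> h; apply/forallP => j; apply/implyP => hj; apply: h. Qed.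

Lemma S_card_sub m k beta p :
  (S_card (m + k) beta p <= S_card m beta p * S_card k beta p)%N.
Proof.
rewrite !S_cardE.
pose pre (v : (m + k).-tuple bool) := [tuple cell v (val i) | i < m].
pose suf (v : (m + k).-tuple bool) := [tuple cell v (m + val i) | i < k].
pose f v := (pre v, suf v).
have finj : injective f.
  move=> v v' e; have hp : pre v = pre v' := congr1 fst e.
  have hs : suf v = suf v' := congr1 snd e.
  apply: tuple_ext => t.
  case: (ltnP t m) => htm.
    by have := congr1 (fun x => cell x t) hp; rewrite /= !cell_mk htm.
  case: (ltnP t (m + k)) => htk; last by rewrite !cell_out.
  have := congr1 (fun x => cell x (t - m)%N) hs.
  rewrite /suf /= (@cell_mk _ (fun y => cell v (m + y))) (@cell_mk _ (fun y => cell v' (m + y))) ltn_subLR // subnKC // htk; exact.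
rewrite -cardsX -(card_imset _ finj); apply: subset_leq_card.
apply/fintype.subsetP => x /imsetP [v]; rewrite inE => hv ->.
rewrite inE /= !inE; apply/andP; split; apply: wwl_of => j hj.
- rewrite (eq_bigr (fun l : 'I_beta => (cell v (j + l) : nat))).
    by apply: wwl_window hv _; rewrite (leq_trans hj) // leq_addr.
  move=> l _; rewrite cell_mk (leq_trans _ hj) // ltn_add2l ltn_ord //.
- rewrite (eq_bigr (fun l : 'I_beta => (cell v ((m + j) + l) : nat))).
    by apply: wwl_window hv _; rewrite -addnA leq_add2l.
  move=> l _; rewrite (@cell_mk _ (fun t => cell v (m + t))) (leq_trans _ hj) ?addnA // ltn_add2l ltn_ord //.
Qed.

Lemma fekete (R : realType) (a : nat -> R) :
  (forall n, 0 <= a n) -> (forall n, a n <= n%:R) ->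
  (forall q m r, a (q * m + r)%N <= q%:R * a m + a r) ->
  exists L : R, 0 <= L /\ ((fun n => (n%:R)^-1 * a n) @ \oo --> L)%classic.
Proof.
move=> a0 an asub.
pose E := [set x : R | exists2 n, (0 < n)%N & x = a n / n%:R]%classic.
have E1 : E (a 1%N / 1) by exists 1%N.
have lb0 : lbound E 0.
  by move=> x [n n0 ->]; rewrite divr_ge0.
have hE : has_inf E by split; [exists (a 1%N / 1) | exists 0].
set L := inf E.
have L0 : 0 <= L by apply: lb_le_inf => //; exists (a 1%N / 1).
have lower n : (0 < n)%N -> L <= a n / n%:R.
  by move=> n0; apply: ge_inf; [exists 0|exists n].
exists L; split => //.
apply/cvgrPdist_le => eps eps0.
have eps20 : 0 < eps / 2 by rewrite divr_gt0.
have [e [m m0 ->] hm] := inf_adherent eps20 hE.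
have m0' : (0 : R) < m%:R by rewrite ltr0n.
have ham : a m <= (L + eps / 2) * m%:R.
  by rewrite -ler_pdivrMr // ltW.
exists (Num.truncn (2 * m%:R / eps)).+1 => // n /= hn.
have n0 : (0 < n)%N by apply: leq_trans hn.
have n0' : (0 : R) < n%:R by rewrite ltr0n.
have hn' : 2 * m%:R / eps < n%:R.
  by apply: lt_le_trans (truncnS_gt _) _; rewrite ler_nat.
have hmn : m%:R <= n%:R * (eps / 2).
  move: hn'; rewrite ltr_pdivrMr // => h.
  rewrite mulrA; apply: ltW; move: h; rewrite (mulrC n%:R) => h; lra.
have hdiv := divn_eq n m.
set q := (n %/ m)%N in hdiv; set r := (n %% m)%N in hdiv.
have hr : (r < m)%N by rewrite ltn_mod.
have han : a n <= q%:R * a m + r%:R.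
  have -> : a n = a (q * m + r)%N by rewrite -hdiv.
  by apply: (le_trans (asub q m r)); rewrite lerD2l.
have hqm : (q * m <= n)%N by rewrite [X in (_ <= X)%N]hdiv leq_addr.
have hqm' : (q%:R * m%:R : R) <= n%:R by rewrite -natrM ler_nat.
have hr' : (r%:R : R) <= m%:R by rewrite ler_nat ltnW.
have hq0 : (0 : R) <= q%:R by [].
have key : a n <= (L + eps) * n%:R.
  apply: (le_trans han).
  have h1 : q%:R * a m <= (L + eps / 2) * n%:R.
    apply: le_trans (ler_wpM2l hq0 ham) _.
    rewrite mulrCA ler_wpM2l //; last by rewrite addr_ge0 // ltW.
  have h2 : (r%:R : R) <= n%:R * (eps / 2) by apply: le_trans hmn.
  have -> : (L + eps) * n%:R = (L + eps / 2) * n%:R + n%:R * (eps / 2) by field.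
  lra.
have lo := lower n n0.
have up : a n / n%:R <= L + eps by rewrite ler_pdivrMr.
rewrite mulrC ler_norml; apply/andP; split; lra.
Qed.

Lemma ln2_gt0 (R : realType) : (0 : R) < ln 2.
Proof. by rewrite ln_gt0 // ltr1n. Qed.

Lemma log2_le (R : realType) (x y : nat) : (0 < x)%N -> (x <= y)%N ->
  log2 (x%:R : R) <= log2 (y%:R : R).
Proof.
move=> x0 xy; rewrite /log2 ler_pM2r ?invr_gt0 ?ln2_gt0 //.
by rewrite ler_ln ?posrE ?ltr0n ?ler_nat // (leq_trans x0).
Qed.

Lemma log2_mul (R : realType) (x y : nat) : (0 < x)%N -> (0 < y)%N ->
  log2 ((x * y)%:R : R) = log2 (x%:R : R) + log2 (y%:R : R).
Proof.
by move=> x0 y0; rewrite /log2 natrM lnM ?posrE ?ltr0n // mulrDl.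
Qed.

Lemma log2_exp (R : realType) (x k : nat) : (0 < x)%N ->
  log2 ((x ^ k)%:R : R) = k%:R * log2 (x%:R : R).
Proof.
move=> x0; rewrite /log2 natrX lnXn ?ltr0n // -mulr_natl; ring.
Qed.

Lemma log2_2 (R : realType) : log2 (2%:R : R) = 1.
Proof. by rewrite /log2 divff // gt_eqF // ln2_gt0. Qed.

Lemma log2_ge0 (R : realType) (x : nat) : (0 < x)%N -> 0 <= log2 (x%:R : R).
Proof.
move=> x0; rewrite /log2 divr_ge0 ?ln_ge0 ?ler1n // ltW // ln2_gt0.
Qed.

Lemma S_card_qmr m q r beta p :
  (S_card (q * m + r) beta p <= S_card m beta p ^ q * S_card r beta p)%N.
Proof.
elim: q => [|q IH]; first by rewrite mul0n add0n expn0 mul1n.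
rewrite mulSn -addnA (leq_trans (S_card_sub _ _ _ _)) // expnS -mulnA.
by rewrite leq_mul2l IH orbT.
Qed.

Lemma g_cvg (R : realType) :
  ((fun n => (n%:R)^-1 * log2 ((2 * n.+1)%:R : R)) @ \oo --> (0 : R))%classic.
Proof.
apply/cvgrPdist_le => e e0.
set d := e * ln 2.
have d0 : 0 < d by rewrite mulr_gt0 // ln2_gt0.
exists (Num.truncn (8 / d ^+ 2)).+1 => // n /= hn.
have n0 : (0 < n)%N by apply: leq_trans hn.
have n0' : (1 : R) <= n%:R by rewrite ler1n.
have hn' : 8 / d ^+ 2 < n%:R.
  by apply: lt_le_trans (truncnS_gt _) _; rewrite ler_nat.
have d20 : 0 < d ^+ 2 by rewrite exprn_gt0.
have h8 : 8 < d ^+ 2 * n%:R by rewrite mulrC -ltr_pdivrMr.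
have hexp : (2 * n.+1)%:R <= expR (d * n%:R).
  apply: le_trans (expR_ge1Dxn 1 (mulr_ge0 (ltW d0) (ler0n _ n))).
  rewrite natrM (_ : n.+1%:R = n%:R + 1 :> R) ?natr1 // (_ : 2`!%:R = 2 :> R) // exprMn.
  have : 8 * n%:R <= d ^+ 2 * n%:R * n%:R by rewrite ler_pM2r ?ltW // (lt_le_trans ltr01).
  nra.
have hln : ln ((2 * n.+1)%:R : R) <= d * n%:R.
  by rewrite -ler_expR lnK // posrE ltr0n.
rewrite sub0r normrN ger0_norm; last by rewrite mulr_ge0 // log2_ge0.
have h1 : log2 ((2 * n.+1)%:R : R) <= e * n%:R.
  by rewrite /log2 ler_pdivrMr ?ln2_gt0 // (mulrC e) -mulrA (mulrC n%:R) -/d.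
by rewrite mulrC ler_pdivrMr ?ltr0n.
Qed.

Unset Implicit Arguments.
Local Open Scope classical_set_scope.
Local Open Scope ring_scope.

Theorem theorem5 (R : realType) (beta p : nat) :
  (0 < p)%N -> (p <= beta)%N ->
  exists L : R,
    (fun n : nat => Cn R n 1 beta p) @ \oo --> L /\
    (fun n : nat => wwl_rate R beta p n) @ \oo --> L.
Proof.
move=> _ _.
pose a n := log2 ((S_card n beta p)%:R : R).
have a0 n : 0 <= a n by apply: log2_ge0; apply: S_card_ge1.
have an n : a n <= n%:R.
  rewrite /a (le_trans (log2_le R (S_card_ge1 n beta p) (S_card_le n beta p))) //.
  by rewrite log2_exp // log2_2 mulr1.
have asub q m r : a (q * m + r)%N <= q%:R * a m + a r.
  rewrite /a (le_trans (log2_le R (S_card_ge1 _ beta p) (S_card_qmr m q r beta p))) //.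
  rewrite log2_mul ?expn_gt0 ?S_card_ge1 // log2_exp ?S_card_ge1 //.
have [L [L0 hL]] := fekete a0 an asub.
exists L; split; last exact: hL.
pose g n := (n%:R)^-1 * log2 ((2 * n.+1)%:R : R).
have hf : (fun n => (n%:R)^-1 * a n - g n) @ \oo --> L.
  rewrite -[X in _ --> X](subr0 L); apply: cvgB => //; exact: g_cvg.
have hh : (fun n => (n%:R)^-1 * a n + g n) @ \oo --> L.
  rewrite -[X in _ --> X](addr0 L); apply: cvgD => //; exact: g_cvg.
apply: (squeeze_cvgr _ hf hh).
exists 1%N => // n /= n0.
have [M [M0 [hS [lo up]]]] := Cn_bounds R beta p n0.
have n0' : (0 : R) < n%:R by rewrite ltr0n.
have l2 : 1 <= log2 ((2 * n.+1)%:R : R).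
  have := @log2_le R 2 (2 * n.+1) isT (leq_pmulr 2 (ltn0Sn n)); by rewrite log2_2.
have hM : a n <= log2 ((2 * n.+1)%:R : R) + log2 (M%:R : R).
  rewrite -log2_mul ?muln_gt0 //; exact: log2_le (S_card_ge1 _ _ _) hS.
rewrite -/(a n) in up.
apply/andP; split.
  have -> : (n%:R)^-1 * a n - g n = (a n - log2 ((2 * n.+1)%:R : R)) * (n%:R)^-1.
    by rewrite /g; ring.
  apply: le_trans lo; apply: ler_wpM2r.
    by rewrite invr_ge0 ltW.
  lra.
have -> : (n%:R)^-1 * a n + g n = (a n + log2 ((2 * n.+1)%:R : R)) * (n%:R)^-1.
  by rewrite /g; ring.
apply: (le_trans up); apply: ler_wpM2r.
  by rewrite invr_ge0 ltW.
lra.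
Qed.
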